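(* Let $P$ be a nonempty rational polyhedron whose affine hull is $\{x:Ax=b\}$, where $A,b$ are integral. Then for every prime $p$, $P$ contains a $p$-adic point if, and only if, there does not exist a real vector $y$ such that $y^\top A$ is integral and $y^\top b$ is not a $p$-adic rational.
   Context: A $p$-adic rational is a number $a/p^k$ with $a,k\in\mathbb{Z}$, $k\ge0$; a vector is $p$-adic if all entries are $p$-adic rationals. *)

(* Defs.v *)
From HB Require Import structures.
From mathcomp Require Import all_boot all_order all_algebra.
From mathcomp Require Import reals.
Set Implicit Arguments. Unset Strict Implicit. Unset Printing Implicit Defensive.
Import Order.TTheory GRing.Theory Num.Theory.
Local Open Scope ring_scope.

Definition padic_rat (R : realType) (p : nat) (x : R) : Prop :=
  exists (a : int) (k : nat), x = a%:~R / (p%:R) ^+ k.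

Definition padic_vec (R : realType) (p n : nat) (x : 'cV[R]_n) : Prop :=
  forall i, padic_rat p (x i 0).

Definition int_row (R : realType) (n : nat) (v : 'rV[R]_n) : Prop :=
  forall j, v 0 j \is a Num.int.

Definition intmx (R : realType) (m n : nat) (A : 'M[int]_(m, n)) : 'M[R]_(m, n) :=
  map_mx (fun z : int => z%:~R) A.
Definition ratmx (R : realType) (m n : nat) (A : 'M[rat]_(m, n)) : 'M[R]_(m, n) :=
  map_mx (fun q : rat => ratr q) A.

Definition polyhedron (R : realType) (k n : nat) (C : 'M[rat]_(k, n))
  (d : 'cV[rat]_k) (x : 'cV[R]_n) : Prop :=
  forall i, (ratmx R C *m x) i 0 <= (ratmx R d) i 0.

Definition affine_hull (R : realType) (n : nat) (S : 'cV[R]_n -> Prop)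
  (x : 'cV[R]_n) : Prop :=
  exists (t : nat) (lam : 'I_t -> R) (v : 'I_t -> 'cV[R]_n),
    (forall i, S (v i)) /\ \sum_(i < t) lam i = 1 /\
    x = \sum_(i < t) lam i *: v i.

(* Main.v *)
Require Import Defs.
From HB Require Import structures.
From mathcomp Require Import all_boot all_order all_algebra.
From mathcomp Require Import reals boolp ring lra.
Import Order.TTheory GRing.Theory Num.Theory.
Local Open Scope ring_scope.
Set Implicit Arguments. Unset Strict Implicit.

Section Padic.
Variables (R : realType) (p : nat).
Hypothesis p0 : (0 < p)%N.

Lemma P_neq0 k : (p%:R : R) ^+ k != 0.
Proof. by rewrite expf_neq0 // pnatr_eq0 -lt0n. Qed.

Lemma padic_int (z : int) : padic_rat p (z%:~R : R).
Proof. by exists z, 0%N; rewrite expr0 divr1. Qed.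

Lemma padicD (x y : R) : padic_rat p x -> padic_rat p y -> padic_rat p (x + y).
Proof.
case=> a [k ->] [b [l ->]].
exists (a * (p%:Z) ^+ l + b * (p%:Z) ^+ k), (k + l)%N.
have h1 := P_neq0 k; have h2 := P_neq0 l.
rewrite rmorphD !rmorphM /= !rmorphXn /= exprD.
by field; rewrite h1 h2.
Qed.

Lemma padicM (x y : R) : padic_rat p x -> padic_rat p y -> padic_rat p (x * y).
Proof.
case=> a [k ->] [b [l ->]].
exists (a * b), (k + l)%N.
have h1 := P_neq0 k; have h2 := P_neq0 l.
rewrite rmorphM /= exprD.
by field; rewrite h1 h2.
Qed.

Lemma padic_sum (I : finType) (F : I -> R) :
  (forall i, padic_rat p (F i)) -> padic_rat p (\sum_i F i).
Proof.
move=> H; apply: (big_ind (padic_rat p)) => //.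
  by exists 0, 0%N; rewrite mul0r.
exact: padicD.
Qed.

Lemma padic_intmx (m n : nat) (M : 'M[int]_(m, n)) (z : 'cV[R]_n) :
  padic_vec p z -> padic_vec p (intmx R M *m z).
Proof.
move=> hz i; rewrite mxE; apply: padic_sum => j.
by rewrite mxE; apply: padicM => //; apply: padic_int.
Qed.

End Padic.

Theorem corollary2p6 (R : realType) (n m k : nat)
  (C : 'M[rat]_(k, n)) (d : 'cV[rat]_k)
  (A : 'M[int]_(m, n)) (b : 'cV[int]_m) :
  (exists x : 'cV[R]_n, polyhedron C d x) ->
  (forall x : 'cV[R]_n,
      affine_hull (polyhedron C d) x <-> intmx R A *m x = intmx R b) ->
  forall p : nat, prime p ->
    ((exists x : 'cV[R]_n, polyhedron C d x /\ padic_vec p x) <->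
     ~ (exists y : 'cV[R]_m,
          int_row (y^T *m intmx R A) /\ ~ padic_rat p ((y^T *m intmx R b) 0 0))).
Proof.
move=> [x0 Qx0] Hah p pp.
have p0 : (0 < p)%N by exact: prime_gt0.
have QAb : forall v, polyhedron C d v -> intmx R A *m v = intmx R b.
  move=> v Qv; apply/Hah; exists 1%N, (fun _ => 1), (fun _ => v).
  by rewrite !big_ord1 scale1r.
split.
  case=> x [Qx px] [y [yi ny]]; apply: ny.
  rewrite -(QAb _ Qx) mulmxA mxE; apply: (padic_sum p0) => j.
  apply: (padicM p0) => //.
  by case/intrP: (yi j) => z ->; apply: padic_int.
move=> Hno.
set Q := polyhedron C d.
set CR := ratmx R C; set dR := ratmx R d.
set AR := intmx R A; set bR := intmx R b.
have Himpl : forall j, (forall x, Q x -> (CR *m x) j 0 = dR j 0) ->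
    forall x, AR *m x = bR -> (CR *m x) j 0 = dR j 0.
  move=> j Hj x /Hah [t [lam [w [Qw [s1 ->]]]]].
  rewrite mulmx_sumr summxE.
  under eq_bigr => i _ do rewrite -scalemxAr mxE (Hj _ (Qw i)).
  by rewrite -mulr_suml s1 mul1r.
have hv : forall i : 'I_k, exists v, Q v /\
    ((CR *m v) i 0 < dR i 0 \/ forall x, Q x -> (CR *m x) i 0 = dR i 0).
  move=> i; case: (EM (exists v, Q v /\ (CR *m v) i 0 < dR i 0)).
    by case=> v [Qv lt]; exists v; split => //; left.
  move=> nex; exists x0; split => //; right => x Qx.
  apply/eqP; rewrite eq_le (Qx i) /= leNgt; apply/negP => lt.
  by apply: nex; exists x.
case: (fin_all_exists hv) => v hv'.
set c := (k.+1%:R : R)^-1 *: (x0 + \sum_i v i).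
have kpos : (0 : R) < k.+1%:R by rewrite ltr0n.
have Cc : forall j, (CR *m c) j 0 =
    (k.+1%:R)^-1 * ((CR *m x0) j 0 + \sum_i (CR *m v i) j 0).
  move=> j; rewrite -scalemxAr mxE mulmxDr mulmx_sumr mxE summxE.
  done.
have Qc : Q c.
  move=> j; rewrite Cc ler_pdivrMl //.
  have : \sum_i (CR *m v i) j 0 <= \sum_(i < k) dR j 0.
    by apply: ler_sum => i _; case: (hv' i) => Qv _; exact: (Qv j).
  rewrite sumr_const card_ord => h.
  have := Qx0 j; rewrite -/CR -/dR => h0.
  by rewrite mulr_natl mulrS lerD.
have Cstrict : forall j, (CR *m v j) j 0 < dR j 0 -> (CR *m c) j 0 < dR j 0.
  move=> j hj; rewrite Cc ltr_pdivrMl // (bigD1 j) //=.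
  have : \sum_(i | i != j) (CR *m v i) j 0 <= \sum_(i | i != j) dR j 0.
    by apply: ler_sum => i _; case: (hv' i) => Qv _; exact: (Qv j).
  rewrite sumr_const => h.
  have := Qx0 j; rewrite -/CR -/dR => h0.
  have hc : #|[pred i : 'I_k | i != j]| = k.-1.
    by rewrite cardC1 card_ord.
  rewrite hc in h.
  have kk : k = k.-1.+1 by rewrite prednK // (leq_ltn_trans (leq0n _) (ltn_ord j)).
  rewrite [in X in _ < X * _]kk mulr_natl !mulrS addrA.
  by rewrite addrA; apply: ltr_leD => //; apply: ler_ltD.
have Ac : AR *m c = bR.
  rewrite -scalemxAr mulmxDr mulmx_sumr (QAb _ Qx0).
  rewrite (eq_bigr (fun _ => bR)); last by move=> i _; case: (hv' i) => Qv _; exact: QAb.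
  rewrite sumr_const card_ord -mulrS -scaler_nat scalerA mulVf ?scale1r //.
  by rewrite pnatr_eq0.
case: (int_Smith_normal_form A) => L uL [Rm uR [s _ EA]].
set D := \matrix_(i, j) _ in EA.
set LR := intmx R L; set DR := intmx R D; set RR := intmx R Rm.
set LiR := intmx R (invmx L); set RiR := intmx R (invmx Rm).
have EAR : AR = LR *m DR *m RR by rewrite /AR /intmx EA !map_mxM.
have LiL : LiR *m LR = 1%:M by rewrite /LiR /LR /intmx -map_mxM mulVmx // map_mx1.
have RRi : RR *m RiR = 1%:M by rewrite /RiR /RR /intmx -map_mxM mulmxV // map_mx1.
have RiR' : RiR *m RR = 1%:M by rewrite /RiR /RR /intmx -map_mxM mulVmx // map_mx1.
have LiA : LiR *m AR = DR *m RR by rewrite EAR -mulmxA mulmxA LiL mul1mx.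
set zc := RR *m c.
pose good := fun j : 'I_n => [exists i : 'I_m, D i j != 0].
have Hgood : forall j, good j -> padic_rat p (zc j 0).
  move=> j /existsP [i nz].
  have ij : (i : nat) = j.
    apply/eqP; apply: contraNT nz; rewrite mxE => /negbTE ->; by rewrite mulr0n.
  have nzR : DR i j != 0 by rewrite /DR /intmx mxE intr_eq0.
  have rowD : row i DR = DR i j *: 'e_j.
    apply/matrixP => r l; rewrite !mxE (ord1 r) eqxx /=.
    case: (eqVneq l j) => [->|ne]; first by rewrite mulr1.
    have : (i : nat) != l by rewrite ij; apply/eqP => /val_inj /esym /eqP; rewrite (negbTE ne).
    by move/negbTE => ->; rewrite mulr0n mulr0.
  set a := (DR i j)^-1.
  have yA : (a *: (row i LiR)^T)^T *m AR = row j RR.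
    rewrite linearZ /= trmxK -scalemxAl -row_mul LiA row_mul rowD -scalemxAl.
    by rewrite scalerA mulVf // scale1r -rowE.
  case: (EM (padic_rat p (zc j 0))) => // np; exfalso; apply: Hno.
  exists (a *: (row i LiR)^T); split.
    by rewrite yA => l; rewrite !mxE; exact: intr_int.
  have -> : intmx R b = bR by []. by rewrite -Ac mulmxA yA -row_mul mxE.
pose G := CR *m RiR.
pose M j := \sum_l `|G j l|.
pose gap j := dR j 0 - (CR *m c) j 0.
pose N j := Num.truncn (M j / gap j).
pose K := (\sum_j N j)%N.
pose P := (p%:R : R) ^+ K.
have Ppos : 0 < P by rewrite exprn_gt0 // ltr0n.
have Pn0 : P != 0 by rewrite gt_eqF.
pose z := \col_l (if good l then zc l 0 else (Num.floor (zc l 0 * P))%:~R / P).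
pose x := RiR *m z.
have zerr : forall l, `|z l 0 - zc l 0| <= P^-1.
  move=> l; rewrite /z mxE; case: ifP => _.
    by rewrite subrr normr0 invr_ge0 ltW.
  have := floor_itv (zc l 0 * P); set f := Num.floor _; move=> /andP [h1 h2].
  rewrite intrD in h2.
  have e : f%:~R / P - zc l 0 = (f%:~R - zc l 0 * P) * P^-1 by field.
  rewrite e ler_norml; apply/andP; split.
    by rewrite -mulN1r ler_pM2r ?invr_gt0 //; lra.
  by rewrite -[X in _ <= X]mul1r ler_pM2r ?invr_gt0 //; lra.
have padz : padic_vec p z.
  move=> l; rewrite mxE; case: ifP => [/Hgood //|_].
  by exists (Num.floor (zc l 0 * P)), K.
have padx : padic_vec p x by apply: padic_intmx.
have Dz : DR *m z = DR *m zc.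
  apply/matrixP => i r; rewrite !mxE; apply: eq_bigr => l _.
  case: (eqVneq (D i l) 0) => [h|h].
    by rewrite /DR /intmx mxE h mul0r mul0r.
  have gl : good l by apply/existsP; exists i.
  by rewrite (ord1 r) /z mxE gl.
have Ax : AR *m x = bR.
  rewrite EAR /x -!mulmxA (mulmxA RR) RRi mul1mx Dz /zc !mulmxA -EAR.
  exact: Ac.
exists x; split => //.
move=> j; rewrite -/CR -/dR; case: (hv' j) => _ [hj|hj]; last by rewrite (Himpl j hj x Ax).
have Cs := Cstrict j hj.
have ex : (CR *m x) j 0 = (CR *m c) j 0 + (G *m (z - zc)) j 0.
  rewrite /G -mulmxA mulmxBr /zc (mulmxA RiR) RiR' mul1mx -/x.
  rewrite mulmxBr.
  have -> : (CR *m x - CR *m c) j 0 = (CR *m x) j 0 - (CR *m c) j 0.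
    by rewrite !mxE.
  by rewrite addrC subrK.
have eb : `|(G *m (z - zc)) j 0| <= M j * P^-1.
  rewrite mxE; apply: le_trans (ler_norm_sum _ _ _) _; rewrite /M mulr_suml.
  apply: ler_sum => l _; rewrite normrM.
  have -> : (z - zc) l 0 = z l 0 - zc l 0 by rewrite !mxE.
  apply: ler_wpM2l; [exact: normr_ge0 | exact: zerr].
have gpos : 0 < gap j by rewrite subr_gt0.
have NK : ((N j).+1 <= p ^ K)%N.
  apply: leq_trans (ltn_expl K (prime_gt1 pp)).
  rewrite ltnS /K (bigD1 j) //=; exact: leq_addr.
have h1 : M j / gap j < P.
  apply: lt_le_trans (truncnS_gt _) _.
  by rewrite /P -natrX ler_nat.
have h2 : M j * P^-1 < gap j.
  by rewrite ltr_pdivrMr // mulrC -ltr_pdivrMr.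
rewrite ex; apply: ltW.
have := ler_norm ((G *m (z - zc)) j 0).
rewrite /gap in h2; lra.
Qed.
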